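(* Let $n\ge1$ and let $\mathcal V$ be a variety with $n+2$ Gumm terms. Then $\mathcal V$ satisfies $$\alpha(\beta\circ\gamma\circ\beta\circ\gamma\circ\beta)\subseteq(\alpha\beta\circ_{4n-1}\alpha\gamma)\circ\alpha(\gamma\circ\beta)\circ(\alpha\gamma\circ_{2n}\alpha\beta),$$ and consequently $\mathcal V$ satisfies $\alpha(\beta\circ\alpha\gamma\circ\beta\circ\alpha\gamma\circ\beta)\subseteq\alpha\beta\circ_{6n+1}\alpha\gamma$.
   Context: Here $\alpha,\beta,\gamma$ range over congruences of algebras in $\mathcal V$. $\circ$ is relational composition, juxtaposition is intersection. For relations $X,Y$ and $m\ge1$, $X\circ_m Y$ denotes $X\circ Y\circ X\circ\cdots$ with $m$ factors. A variety has $n+2$ Gumm terms if it has ternary terms $p,j_1,\dots,j_{n+1}$ satisfying: $x=j_i(x,y,x)$ for all $i$; $x=p(x,z,z)$; $p(x,x,z)=j_1(x,x,z)$; $j_i(x,z,z)=j_{i+1}(x,z,z)$ for odd $i\le n$; $j_i(x,x,z)=j_{i+1}(x,x,z)$ for even $i\le n$; $j_{n+1}(x,y,z)=z$. *)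

(* Defs.v *)
From mathcomp Require Import all_boot.
Set Implicit Arguments. Unset Strict Implicit. Unset Printing Implicit Defensive.

Record signature := Signature { op_sym : Type; arity : op_sym -> nat }.

Record algebra (sig : signature) := Algebra {
  carrier :> Type;
  interp : forall f : op_sym sig, ('I_(arity f) -> carrier) -> carrier }.

Inductive term (sig : signature) (X : Type) : Type :=
  | Var : X -> term sig X
  | App : forall f : op_sym sig, ('I_(arity f) -> term sig X) -> term sig X.

Fixpoint eval (sig : signature) (A : algebra sig) (X : Type) (env : X -> A)
  (t : term sig X) : A :=
  match t with
  | Var x => env x
  | App f args => @interp sig A f (fun i => eval env (args i))
  end.

Definition satisfies_id (sig : signature) (A : algebra sig)
  (l r : term sig nat) : Prop :=
  forall env : nat -> A, eval env l = eval env r.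

Definition in_variety (sig : signature) (Sigma : term sig nat -> term sig nat -> Prop)
  (A : algebra sig) : Prop :=
  forall l r, Sigma l r -> satisfies_id A l r.

Definition eval3 (sig : signature) (A : algebra sig) (t : term sig nat) (x y z : A) : A :=
  eval (fun k => match k with 0 => x | 1 => y | _ => z end) t.

(** The variety defined by [Sigma] has n+2 Gumm terms p, j_1, ..., j_{n+1}. *)
Definition has_gumm_terms (sig : signature)
  (Sigma : term sig nat -> term sig nat -> Prop) (n : nat) : Prop :=
  exists (p : term sig nat) (j : nat -> term sig nat),
  forall A : algebra sig, in_variety Sigma A ->
    (forall i, 1 <= i <= n.+1 -> forall x y : A, eval3 (j i) x y x = x) /\
    [/\ (forall x z : A, eval3 p x z z = x),
        (forall x z : A, eval3 p x x z = eval3 (j 1) x x z),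
        (forall i, 1 <= i <= n -> odd i -> forall x z : A,
            eval3 (j i) x z z = eval3 (j i.+1) x z z),
        (forall i, 1 <= i <= n -> ~~ odd i -> forall x z : A,
            eval3 (j i) x x z = eval3 (j i.+1) x x z) &
        (forall x y z : A, eval3 (j n.+1) x y z = z)].

Definition relation (T : Type) := T -> T -> Prop.

Definition rcomp (T : Type) (X Y : relation T) : relation T :=
  fun a c => exists b, X a b /\ Y b c.

Definition rint (T : Type) (X Y : relation T) : relation T :=
  fun a b => X a b /\ Y a b.

Definition rincl (T : Type) (X Y : relation T) : Prop :=
  forall a b, X a b -> Y a b.

(** [rcomp_m m X Y] = X ∘ Y ∘ X ∘ ... with m factors (m >= 1);
    for m = 0 we use the diagonal (never used below). *)
Fixpoint rcomp_m (T : Type) (m : nat) (X Y : relation T) : relation T :=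
  match m with
  | 0 => fun a b => a = b
  | 1 => X
  | m'.+1 => rcomp X (rcomp_m m' Y X)
  end.

Definition is_congruence (sig : signature) (A : algebra sig) (R : relation A) : Prop :=
  [/\ (forall a, R a a),
      (forall a b, R a b -> R b a),
      (forall a b c, R a b -> R b c -> R a c) &
      (forall (f : op_sym sig) (u v : 'I_(arity f) -> A),
          (forall i, R (u i) (v i)) -> R (@interp sig A f u) (@interp sig A f v))].

(* Main.v *)
Require Import Defs.
From mathcomp Require Import all_boot.
From mathcomp Require Import zify.
Set Implicit Arguments. Unset Strict Implicit. Unset Printing Implicit Defensive.

Fixpoint Dpow (T : Type) (X Y : relation T) (k : nat) : relation T :=
  match k with 0 => fun a b => a = b | k'.+1 => rcomp (rcomp X Y) (Dpow X Y k') end.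

Definition Todd (T : Type) (X Y : relation T) (k : nat) : relation T :=
  rcomp (Dpow X Y k) X.

Lemma Dpow_add T (X Y : relation T) k l (a b c : T) :
  Dpow X Y k a b -> Dpow X Y l b c -> Dpow X Y (k + l) a c.
Proof.
  elim: k a => [|k IH] a /=; first by move=> ->.
  move=> [s [Hs Hk]] Hl. rewrite ?addSn. exists s; split => //. exact: IH Hk Hl.
Qed.

Lemma Dpow_snoc T (X Y : relation T) k (a b c : T) :
  Dpow X Y k a b -> rcomp X Y b c -> Dpow X Y k.+1 a c.
Proof.
  move=> H1 H2. rewrite -addn1. apply: Dpow_add H1 _. by exists c.
Qed.

Lemma T_cat T (X Y : relation T) k l (a b c : T) :
  (forall x y z, X x y -> X y z -> X x z) ->
  Todd X Y k a b -> Todd X Y l b c -> Todd X Y (k + l) a c.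
Proof.
  move=> tX [t [Hk Htb]] [t' [Hl Hc]].
  case: l Hl => [|l] /= Hl.
  - rewrite addn0. subst t'. exists t; split => //. exact: tX Htb Hc.
  - move: Hl => [s [[s' [Hbs' Hs's]] Hl]].
    exists t'; split => //. rewrite addnS -addSn. apply: Dpow_add Hl.
    apply: Dpow_snoc Hk _. exists s'. split=> //. exact: tX Htb Hbs'.
Qed.

Lemma T_sym T (X Y : relation T) k (a b : T) :
  (forall x y, X x y -> X y x) -> (forall x y, Y x y -> Y y x) ->
  Todd X Y k a b -> Todd X Y k b a.
Proof.
  move=> sX sY. elim: k a b => [|k IH] a b.
  - move=> [t [/= -> H]]. exists b; split => //. exact: sX.
  - move=> [t [[s [[s1 [H1 H2]] Hk] Htb]]].
    have [t' [Hk' Ht's]] := IH s b (ex_intro _ t (conj Hk Htb)).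
    exists s1; split; last exact: sX.
    apply: Dpow_snoc Hk' _. exists s; split => //. exact: sY.
Qed.

Lemma T_split T (X Y : relation T) k (a b : T) :
  Todd X Y k a b -> exists c, X a c /\ Dpow Y X k c b.
Proof.
  elim: k a => [|k IH] a.
  - move=> [t [/= -> H]]. by exists b.
  - move=> [t [[s [[s1 [H1 H2]] Hk] Htb]]].
    have [c' [Hc1 Hc2]] := IH s (ex_intro _ t (conj Hk Htb)).
    exists s1; split => //. exists c'; split => //. by exists s.
Qed.

Lemma PE_T T (X Y : relation T) k (a b c : T) :
  X a b -> Dpow Y X k b c -> Todd X Y k a c.
Proof.
  elim: k a b => [|k IH] a b.
  - move=> H /= <-. by exists a.
  - move=> H [s [[s1 [HY HX]] Hk]].
    have [t [Hd Ht]] := IH s1 s HX Hk.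
    exists t; split => //. exists s1; split => //. by exists b.
Qed.

Lemma Dpow_mono T (X Y X' Y' : relation T) k (a b : T) :
  rincl X X' -> rincl Y Y' -> Dpow X Y k a b -> Dpow X' Y' k a b.
Proof.
  move=> iX iY. elim: k a => [|k IH] a //=.
  move=> [s [[s1 [H1 H2]] Hk]]. exists s; split; last exact: IH.
  exists s1; split; [exact: iX | exact: iY].
Qed.

Lemma rcm_step T (X Y : relation T) m (a b c d : T) :
  X a b -> Y b c -> rcomp_m m.+1 X Y c d -> rcomp_m m.+3 X Y a d.
Proof. move=> H1 H2 H3. exists b; split => //. exists c; split => //. Qed.

Lemma Dpow_rcm T (X Y : relation T) k (a b : T) :
  Dpow X Y k.+1 a b -> rcomp_m (2 * k + 2) X Y a b.
Proof.
  elim: k a => [|k IH] a.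
  - move=> [s [[s1 [H1 H2]] /= <-]]. exists s1; split => //.
  - move=> [s [[s1 [H1 H2]] Hk]].
    have -> : 2 * k.+1 + 2 = (2 * k + 1).+3 by lia.
    apply: rcm_step H1 H2 _.
    have -> : (2 * k + 1).+1 = 2 * k + 2 by lia.
    exact: IH.
Qed.

Lemma T_rcm T (X Y : relation T) k (a b : T) :
  Todd X Y k a b -> rcomp_m (2 * k + 1) X Y a b.
Proof.
  elim: k a => [|k IH] a.
  - move=> [t [/= -> H]]. by rewrite ?muln0 ?add0n.
  - move=> [t [[s [[s1 [H1 H2]] Hk] Ht]]].
    have -> : 2 * k.+1 + 1 = (2 * k).+3 by lia.
    apply: rcm_step H1 H2 _.
    have -> : (2 * k).+1 = 2 * k + 1 by lia.
    apply: IH. by exists t.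
Qed.

Lemma zig T (X Y : relation T) (g : nat -> T -> T) (u v : T) L m :
  (forall x, X x x) -> (forall x y, X x y -> X y x) -> (forall x y, Y x y -> Y y x) ->
  (forall x y z, X x y -> X y z -> X x z) ->
  (forall i, 1 <= i -> i <= m -> Todd X Y L (g i u) (g i v)) ->
  (forall i, 1 <= i -> i <= m -> odd i -> g i v = g i.+1 v) ->
  (forall i, 1 <= i -> i <= m -> ~~ odd i -> g i u = g i.+1 u) ->
  Todd X Y (L * m) (g 1 u) (g m.+1 (if odd m then v else u)).
Proof.
  move=> rX sX sY tX.
  elim: m => [|m IH] Hs Hv Hu.
  - rewrite muln0 /=. by exists (g 1 u).
  - have IH' := IH (fun i h1 h2 => Hs i h1 (leqW h2))
                   (fun i h1 h2 => Hv i h1 (leqW h2))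
                   (fun i h1 h2 => Hu i h1 (leqW h2)).
    have Hseg := Hs m.+1 erefl (leqnn _).
    rewrite mulnS addnC.
    case Om: (odd m) IH' => IH' /=; rewrite Om /=.
    + have Hseg' := T_sym sX sY Hseg.
      rewrite (Hu m.+1 erefl (leqnn _)) /= ?Om // in Hseg'.
      exact: T_cat tX IH' Hseg'.
    + rewrite (Hv m.+1 erefl (leqnn _)) /= ?Om // in Hseg.
      exact: T_cat tX IH' Hseg.
Qed.

Lemma eval_compat sig (A : algebra sig) (R : relation A) (t : term sig nat)
  (e1 e2 : nat -> A) :
  is_congruence R -> (forall k, R (e1 k) (e2 k)) -> R (eval e1 t) (eval e2 t).
Proof.
  move=> [_ _ _ HC] He. elim: t => [x|f args IH] /=; first exact: He.
  apply: HC => i. exact: IH.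
Qed.

Lemma eval3_compat sig (A : algebra sig) (R : relation A) (t : term sig nat)
  (x y z x' y' z' : A) :
  is_congruence R -> R x x' -> R y y' -> R z z' ->
  R (eval3 t x y z) (eval3 t x' y' z').
Proof.
  move=> C H1 H2 H3. rewrite /eval3. apply: eval_compat => // -[|[|k]] //=.
Qed.

Lemma core sig (A : algebra sig) (p : term sig nat) (j : nat -> term sig nat) (m : nat)
  (al be ga : relation A) :
  is_congruence al -> is_congruence be -> is_congruence ga ->
  (forall i, 1 <= i <= m.+2 -> forall x y : A, eval3 (j i) x y x = x) ->
  (forall x z : A, eval3 p x z z = x) ->
  (forall x z : A, eval3 p x x z = eval3 (j 1) x x z) ->
  (forall i, 1 <= i <= m.+1 -> odd i -> forall x z : A,
      eval3 (j i) x z z = eval3 (j i.+1) x z z) ->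
  (forall i, 1 <= i <= m.+1 -> ~~ odd i -> forall x z : A,
      eval3 (j i) x x z = eval3 (j i.+1) x x z) ->
  (forall x y z : A, eval3 (j m.+2) x y z = z) ->
  forall a b c d e f : A, al a f -> be a b -> ga b c -> be c d -> ga d e -> be e f ->
  exists u1 v1, Todd (rint al be) (rint al ga) (2 * m + 1) a u1 /\
     rint al (rcomp ga be) u1 v1 /\ Dpow (rint al ga) (rint al be) m.+1 v1 f.
Proof.
  move=> Cal Cbe Cga Hj1 Hp1 Hp2 Hodd Hev Hlast a b c d e f Haf Hab Hbc Hcd Hde Hef.
  have Cal' := Cal; have Cbe' := Cbe; have Cga' := Cga.
  case: Cal' => ral sal tal _. case: Cbe' => rbe sbe tbe _. case: Cga' => rga sga tga _.
  set P := rint al be. set Q := rint al ga.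
  have rP : forall x, P x x by move=> x; split.
  have sP : forall x y, P x y -> P y x by move=> x y [h1 h2]; split; [apply: sal|apply: sbe].
  have sQ : forall x y, Q x y -> Q y x by move=> x y [h1 h2]; split; [apply: sal|apply: sga].
  have tP : forall x y z, P x y -> P y z -> P x z.
    by move=> x y z [h1 h2] [h3 h4]; split; [apply: tal h1 h3|apply: tbe h2 h4].
  have anc : forall i x w z, 1 <= i <= m.+2 -> al z x -> al (eval3 (j i) x w z) x.
    move=> i x w z Hi Hzx. rewrite -{2}(Hj1 i Hi x w).
    by apply: eval3_compat.
  have stepP : forall t x z o w w', (forall w, al (eval3 t x w z) o) -> be w w' ->
      P (eval3 t x w z) (eval3 t x w' z).
    move=> t x z o w w' Ho Hw; split; last by apply: eval3_compat.
    apply: tal (Ho w) _. apply: sal. exact: Ho.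
  have stepQ : forall t x z o w w', (forall w, al (eval3 t x w z) o) -> ga w w' ->
      Q (eval3 t x w z) (eval3 t x w' z).
    move=> t x z o w w' Ho Hw; split; last by apply: eval3_compat.
    apply: tal (Ho w) _. apply: sal. exact: Ho.
  have seg5 : forall t x z o w0 w1 w2 w3 w4 w5, (forall w, al (eval3 t x w z) o) ->
      be w0 w1 -> ga w1 w2 -> be w2 w3 -> ga w3 w4 -> be w4 w5 ->
      Todd P Q 2 (eval3 t x w0 z) (eval3 t x w5 z).
    move=> t x z o w0 w1 w2 w3 w4 w5 Ho H1 H2 H3 H4 H5.
    exists (eval3 t x w4 z); split; last exact: stepP Ho H5.
    exists (eval3 t x w2 z); split.
      exists (eval3 t x w1 z); split; [exact: stepP Ho H1|exact: stepQ Ho H2].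
    exists (eval3 t x w4 z); split => //.
    exists (eval3 t x w3 z); split; [exact: stepP Ho H3|exact: stepQ Ho H4].
  have seg3 : forall t x z o w0 w1 w2 w3, (forall w, al (eval3 t x w z) o) ->
      be w0 w1 -> ga w1 w2 -> be w2 w3 ->
      Todd P Q 1 (eval3 t x w0 z) (eval3 t x w3 z).
    move=> t x z o w0 w1 w2 w3 Ho H1 H2 H3.
    exists (eval3 t x w2 z); split; last exact: stepP Ho H3.
    exists (eval3 t x w2 z); split => //.
    exists (eval3 t x w1 z); split; [exact: stepP Ho H1|exact: stepQ Ho H2].
  have anc1 : forall w, al (eval3 (j 1) f w a) f.
    by move=> w; apply: anc.
  set u1 := eval3 (j 1) f d a.
  have T1 : Todd P Q 1 u1 (eval3 (j 2) f a a).
    rewrite -(Hodd 1 erefl erefl f a).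
    apply: (seg3 _ _ _ _ _ c b _ anc1); [exact: sbe|exact: sga|exact: sbe].
  have Tz : Todd P Q (2 * m) (eval3 (j 2) f a a) a.
    have := @zig _ P Q (fun i w => eval3 (j i.+1) f w a) a f 2 m rP sP sQ tP.
    rewrite Hlast. apply.
    - move=> i h1 h2 /=. apply: (seg5 _ _ _ f _ b c d e) => // w.
      by apply: anc => //; lia.
    - move=> i h1 h2 Oi /=. apply: Hev; [lia| by rewrite /= Oi].
    - move=> i h1 h2 Oi /=. apply: Hodd; [lia| by rewrite /= Oi].
  have Hpre : Todd P Q (2 * m + 1) a u1.
    apply: T_sym sP sQ _. rewrite addnC. exact: T_cat tP T1 Tz.
  set x := eval3 (j 1) f e a.
  have Hu1x : Q u1 x by exact: stepQ anc1 Hde.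
  set y := eval3 p f e b.
  set y' := eval3 p f d c.
  have Hxy : be x y.
    apply: tbe (_ : be x (eval3 (j 1) f f a)) _; first by apply: eval3_compat.
    rewrite -Hp2. apply: eval3_compat => //; exact: sbe.
  have Hyy' : ga y y' by apply: eval3_compat => //; exact: sga.
  have Hy'f : be y' f.
    rewrite -[X in be _ X](Hp1 f c). apply: eval3_compat => //; exact: sbe.
  have Hxf : al x f by exact: anc1.
  set q := eval3 p x y y'.
  have Hxq : ga x q by rewrite -{1}(Hp1 x y); apply: eval3_compat.
  set v0 := eval3 (j 1) x x f.
  have Hqv0 : be q v0.
    apply: tbe (_ : be q (eval3 p x y f)) _; first by apply: eval3_compat.
    rewrite /v0 -Hp2. apply: eval3_compat => //; exact: sbe.
  have ancx : forall i w, 1 <= i <= m.+2 -> al (eval3 (j i) x w f) x.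
    move=> i w Hi; apply: anc => //; exact: sal.
  have Tpost : Todd P Q m.+1 v0 f.
    have := @zig _ P Q (fun i w => eval3 (j i) x w f) x f 1 m.+1 rP sP sQ tP.
    rewrite Hlast mul1n. apply.
    - move=> i h1 h2 /=. apply: (seg3 _ _ _ x _ y y') => // w.
      apply: ancx; lia.
    - move=> i h1 h2 Oi /=. apply: Hodd => //; lia.
    - move=> i h1 h2 Oi /=. apply: Hev => //; lia.
  have [v1 [[Hv01a Hv01b] Hv1]] := T_split Tpost.
  exists u1, v1; split => //; split => //.
  split.
  - eapply tal; first exact: (anc1 d). eapply tal; first exact: (sal _ _ Hxf).
    eapply tal; last exact: Hv01a. apply: sal. exact: ancx.
  - exists q; split; last exact: (tbe _ _ _ Hqv0 Hv01b).
    case: Hu1x => _ Hu1x. exact: (tga _ _ _ Hu1x Hxq).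
Qed.

Lemma cong_int sig (A : algebra sig) (R S : relation A) :
  is_congruence R -> is_congruence S -> is_congruence (rint R S).
Proof.
  move=> [r1 s1 t1 c1] [r2 s2 t2 c2]; split.
  - by move=> x; split.
  - by move=> x y [h1 h2]; split; [apply: s1|apply: s2].
  - by move=> x y z [h1 h2] [h3 h4]; split; [apply: t1 h1 h3|apply: t2 h2 h4].
  - move=> f u v H; split; [apply: c1 => i; by case: (H i)|apply: c2 => i; by case: (H i)].
Qed.

Theorem mainTheorem13 (sig : signature)
  (Sigma : term sig nat -> term sig nat -> Prop) (n : nat) :
  1 <= n -> has_gumm_terms Sigma n ->
  forall (A : algebra sig), in_variety Sigma A ->
  forall al be ga : relation A,
    is_congruence al -> is_congruence be -> is_congruence ga ->
    rincl (rint al (rcomp be (rcomp ga (rcomp be (rcomp ga be)))))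
          (rcomp (rcomp_m (4 * n - 1) (rint al be) (rint al ga))
                 (rcomp (rint al (rcomp ga be))
                        (rcomp_m (2 * n) (rint al ga) (rint al be))))
    /\
    rincl (rint al (rcomp be (rcomp (rint al ga) (rcomp be (rcomp (rint al ga) be)))))
          (rcomp_m (6 * n + 1) (rint al be) (rint al ga)).
Proof.
  move=> Hn [p [j Hg]] A HA al be ga Cal Cbe Cga.
  have [Hj1 [Hp1 Hp2 Hodd Hev Hlast]] := Hg A HA.
  clear Hg. case: n Hn Hj1 Hodd Hev Hlast => [//|m] _ Hj1 Hodd Hev Hlast.
  split.
  - move=> a f [Haf [b [Hab [c [Hbc [d [Hcd [e [Hde Hef]]]]]]]]].
    have [u1 [v1 [H1 [H2 H3]]]] :=
      core Cal Cbe Cga Hj1 Hp1 Hp2 Hodd Hev Hlast Haf Hab Hbc Hcd Hde Hef.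
    exists u1; split.
      have -> : 4 * m.+1 - 1 = 2 * (2 * m + 1) + 1 by lia.
      exact: T_rcm H1.
    exists v1; split => //.
    have -> : 2 * m.+1 = 2 * m + 2 by lia.
    exact: Dpow_rcm H3.
  - move=> a f [Haf [b [Hab [c [Hbc [d [Hcd [e [Hde Hef]]]]]]]]].
    have Cg := cong_int Cal Cga.
    have [u1 [v1 [H1 [[H2a [w [H2b H2c]]] H3]]]] :=
      core Cal Cbe Cg Hj1 Hp1 Hp2 Hodd Hev Hlast Haf Hab Hbc Hcd Hde Hef.
    have iQ : rincl (rint al (rint al ga)) (rint al ga) by move=> x y [_ h].
    have iP : rincl (rint al be) (rint al be) by [].
    case: H1 => [t [Hd Ht]].
    have Hd' := Dpow_mono iP iQ Hd.
    have H3' := Dpow_mono iQ iP H3.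
    case: Cal => ral sal tal _.
    have HQ := H2b. case: (HQ) => Hu1w _.
    have Hwv1 : rint al be w v1.
      split; last exact: H2c.
      exact: (tal _ _ _ (sal _ _ Hu1w) H2a).
    have Hdw : Dpow (rint al be) (rint al ga) (2 * m + 2) a w.
      have -> : 2 * m + 2 = (2 * m + 1).+1 by lia.
      apply: Dpow_snoc Hd' _. by exists u1.
    have HT := PE_T Hwv1 H3'.
    case: HT => [t' [Hd2 Ht2]].
    have -> : 6 * m.+1 + 1 = 2 * (2 * m + 2 + m.+1) + 1 by lia.
    apply: T_rcm. exists t'; split => //. exact: Dpow_add Hdw Hd2.
Qed.
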